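(* For all $n,k\in\mathbb Z$, $[x^ky^{n-k}](x+y)^n=\binom nk_{a,b;q,p}$. In particular, \[ (x+y)^n=\sum_{k\ge0}\binom nk_{a,b;q,p}x^ky^{n-k}\ \text{ in } \mathbb C_{a,b;q,p}[[x,y,y^{-1}]],\qquad (x+y)^n=\sum_{k\le n}\binom nk_{a,b;q,p}x^ky^{n-k}\ \text{ in } \mathbb C_{a,b;q,p}[[x,x^{-1},y]]. \]
   Context: Let $q,p\in\mathbb C$ with $|p|<1$. $\theta(x;p)=\prod_{j\ge0}(1-p^jx)(1-p^{j+1}/x)$, $\theta(x_1,\dots,x_\ell;p)=\prod_i\theta(x_i;p)$. Let $\mathbb E_{a,b;q,p}$ be the field of totally elliptic functions in $\log_qa,\log_qb$ (meromorphic, doubly periodic with equal periods $\sigma^{-1},\tau\sigma^{-1}$ where $q=e^{2\pi i\sigma},p=e^{2\pi i\tau}$). $\mathbb C_{a,b;q,p}[x,x^{-1},y,y^{-1}]$ is the associative unital $\mathbb C$-algebra generated by invertible $x,y$ and $\mathbb E_{a,b;q,p}$ (with $a,b$ commuting) subject to $x^{-1}x=xx^{-1}=1$, $y^{-1}y=yy^{-1}=1$, $yx=w_{a,b;q,p}(1,1)xy$, $xf(a,b)=f(aq,bq^2)x$, $yf(a,b)=f(aq^2,bq)y$ for all $f\in\mathbb E_{a,b;q,p}$; $\mathbb C_{a,b;q,p}[[x,y,y^{-1}]]$ and $\mathbb C_{a,b;q,p}[[x,x^{-1},y]]$ are the formal power series extensions (no negative powers of $x$, resp. of $y$), with $(x+y)^n$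 for $n<0$ expanded as $((1+xy^{-1})y)^n$, resp. $(x(1+x^{-1}y))^n$. Here $w_{a,b;q,p}(s,t)=\frac{\theta(aq^{s+2t},bq^{2s+t-2},aq^{t-s-1}/b;p)}{\theta(aq^{s+2t-2},bq^{2s+t},aq^{t-s+1}/b;p)}q$, $W_{a,b;q,p}(s,t)=\prod_{j=1}^tw_{a,b;q,p}(s,j)$ with product convention $\prod_{j=l}^mA_j=A_l\cdots A_m$ ($m>l-1$), $1$ ($m=l-1$), $A_{l-1}^{-1}\cdots A_{m+1}^{-1}$ ($m<l-1$). The elliptic binomial coefficients $\binom nk_{a,b;q,p}$ are the unique family with $\binom n0=\binom nn=1$ and $\binom{n+1}k=\binom nk+\binom n{k-1}W_{a,b;q,p}(k,n+1-k)$ for $(n+1,k)\ne(0,0)$ (closed form $\frac{(q^{1+k},aq^{1+k},bq^{1+k},aq^{1-k}/b;q,p)_{n-k}}{(q,aq,bq^{1+2k},aq/b;q,p)_{n-k}}$, $(x;q,p)_r=\prod_{i=0}^{r-1}\theta(xq^i;p)$). Coefficient extraction: $[x^ky^{n-k}](x+y)^n$ is the coefficient of $x^ky^{n-k}$ (coefficient written on the left) in the first expansion if $k\ge0$ and in the second expansion if $k<0$. *)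

(* Defs.v *)
From HB Require Import structures.
From mathcomp Require Import all_boot all_order all_algebra.
From mathcomp Require Import complex.
From mathcomp Require Import all_classical all_reals all_analysis.
From mathcomp Require Import Rstruct Rstruct_topology.
Import ComplexField.
Import Order.TTheory GRing.Theory Num.Theory.
Import numFieldTopology.Exports numFieldNormedType.Exports.

Set Implicit Arguments.
Unset Strict Implicit.
Unset Printing Implicit Defensive.

Local Open Scope classical_set_scope.
Local Open Scope ring_scope.

Notation CC := (Rdefinitions.R)[i].

(* theta(x;p) = prod_{j>=0} (1 - p^j x)(1 - p^{j+1}/x), as the limit of the
   partial products (convergent for |p| < 1, x <> 0). *)
Definition theta (p x : CC) : CC :=
  lim ((fun N : nat =>
          (\prod_(j < N) ((1 - p ^+ j * x) * (1 - p ^+ j.+1 / x)) : CC^o))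
         @ \oo).

Definition wfun (q p : CC) (s t : int) (a b : CC) : CC :=
  theta p (a * q ^ (s + 2 * t)) * theta p (b * q ^ (2 * s + t - 2))
    * theta p (a * q ^ (t - s - 1) / b)
  / (theta p (a * q ^ (s + 2 * t - 2)) * theta p (b * q ^ (2 * s + t))
       * theta p (a * q ^ (t - s + 1) / b))
  * q.

(* Product convention over integer ranges:
   prod_{j=l}^m A_j = A_l ... A_m        if m >= l-1 (empty product = 1 if m = l-1)
                    = A_{l-1}^-1 ... A_{m+1}^-1   if m < l-1. *)
Definition prodZ (A : int -> CC) (l m : int) : CC :=
  if (l - 1 <= m)%R then \prod_(0 <= i < `|(m - l + 1)%R|%N) A (l + i%:Z)
  else \prod_(0 <= i < `|(l - 1 - m)%R|%N) (A (m + 1 + i%:Z))^-1.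

Definition Wfun (q p : CC) (s t : int) (a b : CC) : CC :=
  prodZ (fun j => wfun q p s j a b) 1 t.

(* This set is
   stable under the shifts a -> a q^i, b -> b q^j, and on it every w(s,t) is a
   finite nonzero number.  Identities in the field E_{a,b;q,p} of the
   relevant functions are checked pointwise on this (dense) set. *)
Definition generic (q p a b : CC) : Prop :=
  a != 0 /\ b != 0 /\
  forall m : int, theta p (a * q ^ m) != 0 /\ theta p (b * q ^ m) != 0
                  /\ theta p (a * q ^ m / b) != 0.

Definition is_ell_binom (q p : CC) (B : int -> int -> CC -> CC -> CC) : Prop :=
  forall a b, generic q p a b ->
    (forall n : int, B n 0 a b = 1) /\
    (forall n : int, B n n a b = 1) /\
    (forall n k : int, (n + 1, k) != (0, 0) ->
       B (n + 1) k a b = B n k a b + B n (k - 1) a b * Wfun q p k (n + 1 - k) a b).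

(* Coefficient functions (functions of (a,b)), and the shift automorphisms
   x f(a,b) = f(aq, bq^2) x,  y f(a,b) = f(aq^2, bq) y, iterated i resp. j
   times (i, j in Z). *)
Definition coef := CC -> CC -> CC.
Definition shx (q : CC) (i : int) (f : coef) : coef :=
  fun a b => f (a * q ^ i) (b * q ^ (2 * i)).
Definition shy (q : CC) (j : int) (f : coef) : coef :=
  fun a b => f (a * q ^ (2 * j)) (b * q ^ j).

(* w_{a,b;q,p}(1,1), so that y x = w11 x y. *)
Definition w11 (q p : CC) : coef := wfun q p 1 1.

(* Normal ordering y^j x = cyx j . x y^j (j in Z), derived from the relations
   y x = w11 x y and y f = (shy 1 f) y:
     cyx 0 = 1,  cyx (j+1) = shy 1 (cyx j) * w11,
     cyx (j-1) = shy (-1) (cyx j) / shy (-1) w11. *)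
Fixpoint cyx_pos (q p : CC) (m : nat) : coef :=
  match m with
  | 0 => fun _ _ => 1
  | m'.+1 => fun a b => shy q 1 (cyx_pos q p m') a b * w11 q p a b
  end.
Fixpoint cyx_neg (q p : CC) (m : nat) : coef :=
  match m with
  | 0 => fun _ _ => 1
  | m'.+1 => fun a b => shy q (-1) (cyx_neg q p m') a b / shy q (-1) (w11 q p) a b
  end.
Definition cyx (q p : CC) (j : int) : coef :=
  match j with
  | Posz m => cyx_pos q p m
  | Negz m => cyx_neg q p m.+1
  end.

(* Formal sums  sum_{i,j in Z} z i j x^i y^j  (coefficients on the left,
   coefficients are functions of (a,b)). *)
Definition series := int -> int -> coef.

Definition one_s : series := fun i j _ _ => if (i == 0) && (j == 0) then 1 else 0.

(* right multiplication by x:  (f x^i y^j) x = (shx i (cyx j) f) x^(i+1) y^j *)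
Definition rmulx (q p : CC) (z : series) : series :=
  fun i j a b => z (i - 1) j a b * shx q (i - 1) (cyx q p j) a b.
Definition rmuly (z : series) : series := fun i j a b => z i (j - 1) a b.
Definition rmulxy (q p : CC) (z : series) : series :=
  fun i j a b => rmulx q p z i j a b + rmuly z i j a b.

Definition eqG (q p : CC) (z1 z2 : series) : Prop :=
  forall i j a b, generic q p a b -> z1 i j a b = z2 i j a b.

(* C_{a,b;q,p}[[x,y,y^-1]]: no negative powers of x *)
Definition inS1 (q p : CC) (z : series) : Prop :=
  forall i j a b, generic q p a b -> i < 0 -> z i j a b = 0.
(* C_{a,b;q,p}[[x,x^-1,y]]: no negative powers of y *)
Definition inS2 (q p : CC) (z : series) : Prop :=
  forall i j a b, generic q p a b -> j < 0 -> z i j a b = 0.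

(* z is (x+y)^n:  for n >= 0, z = 1.(x+y)^n ; for n < 0, z.(x+y)^(-n) = 1,
   i.e. z is the inverse of (x+y)^(-n) (unique in S1 and in S2). *)
Definition is_pow_xy (q p : CC) (n : int) (z : series) : Prop :=
  if 0 <= n then eqG q p z (iter `|n|%N (rmulxy q p) one_s)
  else eqG q p (iter `|n|%N (rmulxy q p) z) one_s.

Definition inS_for (q p : CC) (k : int) (z : series) : Prop :=
  if 0 <= k then inS1 q p z else inS2 q p z.

(* Main.v *)
Require Import Defs.
From HB Require Import structures.
From mathcomp Require Import all_boot all_order all_algebra.
From mathcomp Require Import complex.
From mathcomp Require Import all_classical all_reals all_analysis.
From mathcomp Require Import Rstruct Rstruct_topology.
From mathcomp Require Import ring zify.
Import ComplexField.
Import Order.TTheory GRing.Theory Num.Theory.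
Import numFieldTopology.Exports numFieldNormedType.Exports.
Local Open Scope ring_scope.
Lemma shK (q a : CC) (m n : int) : q != 0 -> a * q ^ m * q ^ n = a * q ^ (m + n).
Proof. by move=> hq; rewrite -mulrA -expfzDr. Qed.

Lemma divK (q a b : CC) (m n : int) : q != 0 -> a * q ^ m / (b * q ^ n) = a * q ^ (m - n) / b.
Proof. move=> hq; rewrite expfzDr // -invr_expz invfM; ring. Qed.

Lemma w11_shift (q p a b : CC) (s t : int) : q != 0 ->
  w11 q p (a * q ^ (s + 2 * t - 3)) (b * q ^ (2 * s + t - 3)) = wfun q p s t a b.
Proof.
move=> hq; rewrite /w11 /wfun !shK // !divK //.
congr (theta p (a * q ^ _) * theta p (b * q ^ _) * theta p (a * q ^ _ / b) / (theta p (a * q ^ _) * theta p (b * q ^ _) * theta p (a * q ^ _ / b)) * q); ring.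
Qed.

Lemma cyx_pos_prod (q p : CC) (m : nat) a b : q != 0 ->
  cyx_pos q p m a b = \prod_(0 <= l < m) w11 q p (a * q ^ (2 * l%:Z)) (b * q ^ l%:Z).
Proof.
move=> hq; elim: m a b => [|m IH] a b /=; first by rewrite big_geq.
rewrite /shy IH big_nat_recl // mulr0 expr0z !mulr1 mulrC; congr (_ * _).
apply: eq_bigr => l _; rewrite !shK // intS; congr (w11 q p (a * q ^ _) (b * q ^ _)); ring.
Qed.

Lemma cyx_neg_prod (q p : CC) (m : nat) a b : q != 0 ->
  cyx_neg q p m a b = \prod_(0 <= l < m) (w11 q p (a * q ^ (- 2 * l.+1%:Z)) (b * q ^ (- l.+1%:Z)))^-1.
Proof.
move=> hq; elim: m a b => [|m IH] a b /=; first by rewrite big_geq.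
rewrite /shy IH big_nat_recl // mulrC; congr (_ * _).
apply: eq_bigr => l _; rewrite !shK // (intS l.+1); congr ((w11 q p (a * q ^ _) (b * q ^ _))^-1); ring.
Qed.

Lemma coefW (q p : CC) (i j : int) a b : q != 0 ->
  shx q (i - 1) (cyx q p j) a b = Wfun q p i j a b.
Proof.
move=> hq; rewrite /shx /Wfun /prodZ subrr.
case: j => [m|m] /=.
  rewrite subrK cyx_pos_prod //; apply: eq_bigr => l _.
  rewrite !shK // -w11_shift //; congr (w11 q p (a * q ^ _) (b * q ^ _)); ring.
transitivity (cyx_neg q p m.+1 (a * q ^ (i - 1)) (b * q ^ (2 * (i - 1)))); first by [].
rewrite cyx_neg_prod // add0n big_nat_rev /=; apply: eq_big_nat => l /andP[_ hl].
have hl' : (l <= m)%N by lia.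
rewrite add0n subSS; congr (_^-1); rewrite !shK // -w11_shift //.
congr (w11 q p (a * q ^ _) (b * q ^ _)); rewrite (intS (m - l)) -(subzn hl') NegzE; ring.
Qed.
Lemma nz6 (x1 x2 x3 x4 x5 x6 q : CC) : q != 0 -> x1 != 0 -> x2 != 0 -> x3 != 0 ->
  x4 != 0 -> x5 != 0 -> x6 != 0 -> x1 * x2 * x3 / (x4 * x5 * x6) * q != 0.
Proof.
move=> *; rewrite !mulf_neq0 // invr_neq0 // !mulf_neq0 //.
Qed.

Lemma wfun_nz (q p : CC) (s t : int) a b : q != 0 -> generic q p a b -> wfun q p s t a b != 0.
Proof.
move=> hq [_ [_ h]].
rewrite /wfun; apply: nz6 => //.
- exact: (proj1 (h _)).
- exact: (proj1 (proj2 (h _))).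
- exact: (proj2 (proj2 (h _))).
- exact: (proj1 (h _)).
- exact: (proj1 (proj2 (h _))).
- exact: (proj2 (proj2 (h _))).
Qed.

Lemma Wfun_nz (q p : CC) s t a b : q != 0 -> generic q p a b -> Wfun q p s t a b != 0.
Proof.
move=> hq g; rewrite /Wfun /prodZ; case: ifP => _;
  (apply: (big_ind (fun x : CC => x != 0)); [exact: oner_neq0 | move=> x y; exact: mulf_neq0 | move=> l _]).
  exact: wfun_nz.
rewrite invr_neq0 //; exact: wfun_nz.
Qed.

Lemma W0 (q p : CC) k a b : Wfun q p k 0 a b = 1.
Proof. by rewrite /Wfun /prodZ subrr lexx subrK big_geq. Qed.

Lemma pair_neq (x y : int) : ~ (x = 0 /\ y = 0) -> (x, y) != (0, 0).
Proof.
move=> h; rewrite xpair_eqE; apply/negP => /andP [/eqP h1 /eqP h2]; exact: h.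
Qed.
Lemma Bzero_d (q p : CC) B a b : q != 0 -> is_ell_binom q p B -> generic q p a b ->
  forall d : nat, forall n : int, (0 <= n) || (n + d%:Z + 1 < 0) -> B n (n + d%:Z + 1) a b = 0.
Proof.
move=> hq hB g; have [B0 [Bn Brec]] := hB a b g.
elim=> [|d IH] n hn.
  have np : (n + 1, n + 1) != (0, 0).
    by apply: pair_neq; case => h1 _; case/orP: hn => hn; lia.
  rewrite addr0; have := Brec n (n + 1) np.
  rewrite (addrK 1 n) (subrr (n + 1)) W0 !Bn mulr1 => h.
  by apply: (addIr 1); rewrite add0r -h.
have h1 : B (n + 1) (n + d.+1%:Z + 1) a b = 0.
  have -> : n + d.+1%:Z + 1 = n + 1 + d%:Z + 1 by rewrite intS; ring.
  by apply: IH; case/orP: hn => hn; apply/orP; [left|right]; lia.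
have h2 : B n (n + d.+1%:Z + 1 - 1) a b = 0.
  have -> : n + d.+1%:Z + 1 - 1 = n + d%:Z + 1 by rewrite intS; ring.
  by apply: IH; case/orP: hn => hn; apply/orP; [left|right]; lia.
have np : (n + 1, n + d.+1%:Z + 1) != (0, 0).
  by apply: pair_neq; case => e1 e2; case/orP: hn => hn; lia.
have := Brec n (n + d.+1%:Z + 1) np.
by rewrite h1 h2 mul0r addr0 => h; rewrite -h.
Qed.

Lemma Bzero_lo (q p : CC) B a b : q != 0 -> is_ell_binom q p B -> generic q p a b ->
  forall d : nat, forall n : int, 0 <= n -> B n (- 1 - d%:Z) a b = 0.
Proof.
move=> hq hB g; have [B0 [Bn Brec]] := hB a b g.
have Wn s t := Wfun_nz q p s t a b hq g.
elim=> [|d IH] n hn.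
  have np : (n + 1, 0 : int) != (0, 0) by apply: pair_neq; case => h1 _; lia.
  have := Brec n 0 np.
  rewrite sub0r subr0 !B0 => h.
  have /eqP : B n (-1) a b * Wfun q p 0 (n + 1) a b = 0.
    by apply: (addrI 1); rewrite addr0 -h.
  by rewrite mulf_eq0 (negbTE (Wn _ _)) orbF => /eqP.
have np : (n + 1, - 1 - d%:Z) != (0, 0) by apply: pair_neq; case => h1 _; lia.
have := Brec n (- 1 - d%:Z) np.
have -> : - 1 - d%:Z - 1 = - 1 - d.+1%:Z by rewrite intS; ring.
rewrite IH ?IH //; last by lia.
move=> h.
have /eqP : B n (- 1 - d.+1%:Z) a b * Wfun q p (-1 - d%:Z) (n + 1 - (-1 - d%:Z)) a b = 0.
  by rewrite -(add0r (_ * _)) -h.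
by rewrite mulf_eq0 (negbTE (Wn _ _)) orbF => /eqP.
Qed.
Lemma nat_of_nonneg (x : int) : 0 <= x -> exists d : nat, x = d%:Z.
Proof. case: x => [d|d] h; [by exists d | by []]. Qed.

Lemma Bhi (q p : CC) B a b : q != 0 -> is_ell_binom q p B -> generic q p a b ->
  forall n k : int, 0 <= n -> n < k -> B n k a b = 0.
Proof.
move=> hq hB g n k hn hk.
have [d hd] : exists d : nat, k - n - 1 = d%:Z by apply: nat_of_nonneg; lia.
have -> : k = n + d%:Z + 1 by lia.
by apply: (Bzero_d q p B a b hq hB g); rewrite hn.
Qed.

Lemma Bmid (q p : CC) B a b : q != 0 -> is_ell_binom q p B -> generic q p a b ->
  forall n k : int, n < k -> k < 0 -> B n k a b = 0.
Proof.
move=> hq hB g n k hn hk.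
have [d hd] : exists d : nat, k - n - 1 = d%:Z by apply: nat_of_nonneg; lia.
have -> : k = n + d%:Z + 1 by lia.
apply: (Bzero_d q p B a b hq hB g); apply/orP; right; lia.
Qed.

Lemma Blo (q p : CC) B a b : q != 0 -> is_ell_binom q p B -> generic q p a b ->
  forall n k : int, 0 <= n -> k < 0 -> B n k a b = 0.
Proof.
move=> hq hB g n k hn hk.
have [d hd] : exists d : nat, - 1 - k = d%:Z by apply: nat_of_nonneg; lia.
have -> : k = - 1 - d%:Z by lia.
exact: (Bzero_lo q p B a b hq hB g).
Qed.

Definition Z1 (B : int -> int -> CC -> CC -> CC) (n : int) : Defs.series :=
  fun i j a b => if (0 <= i) && (j == n - i) then B n i a b else 0.
Definition Z2 (B : int -> int -> CC -> CC -> CC) (n : int) : Defs.series :=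
  fun i j a b => if (i <= n) && (j == n - i) then B n i a b else 0.

Lemma Z1_step (q p : CC) B : q != 0 -> is_ell_binom q p B ->
  forall n, eqG q p (rmulxy q p (Z1 B n)) (Z1 B (n + 1)).
Proof.
move=> hq hB n i j a b g; have [B0 [Bn Brec]] := hB a b g.
rewrite /rmulxy /rmulx /rmuly /Z1 coefW //.
have E1 : (j == n - (i - 1)) = (j == n + 1 - i) by congr (j == _); ring.
have E2 : (j - 1 == n - i) = (j == n + 1 - i) by apply/eqP/eqP => h; lia.
rewrite E1 E2; case: (eqVneq j (n + 1 - i)) => [->|_]; last by rewrite !andbF mul0r addr0.
rewrite !andbT.
case: (boolP (0 <= i - 1)) => h1; case: (boolP (0 <= i)) => h2.
- have np : (n + 1, i) != (0, 0) by apply: pair_neq; case => _ e; lia.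
  by rewrite (Brec n i np) addrC.
- by exfalso; lia.
- have -> : i = 0 by lia.
  by rewrite !B0 mul0r add0r.
- by rewrite mul0r addr0.
Qed.

Lemma Z2_step (q p : CC) B : q != 0 -> is_ell_binom q p B ->
  forall n, eqG q p (rmulxy q p (Z2 B n)) (Z2 B (n + 1)).
Proof.
move=> hq hB n i j a b g; have [B0 [Bn Brec]] := hB a b g.
rewrite /rmulxy /rmulx /rmuly /Z2 coefW //.
have E1 : (j == n - (i - 1)) = (j == n + 1 - i) by congr (j == _); ring.
have E2 : (j - 1 == n - i) = (j == n + 1 - i) by apply/eqP/eqP => h; lia.
rewrite E1 E2; case: (eqVneq j (n + 1 - i)) => [->|_]; last by rewrite !andbF mul0r addr0.
rewrite !andbT.
case: (boolP (i - 1 <= n)) => h1; case: (boolP (i <= n)) => h2.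
- have np : (n + 1, i) != (0, 0) by apply: pair_neq; case => e1 e2; lia.
  have -> : (i <= n + 1) = true by apply/idP; lia.
  by rewrite (Brec n i np) addrC.
- have ei : i = n + 1 by lia.
  by rewrite ei (addrK 1 n) (subrr (n + 1)) W0 !Bn mulr1 addr0 lexx.
- by exfalso; lia.
- have -> : (i <= n + 1) = false by apply/negbTE/negP => ?; lia.
  by rewrite mul0r addr0.
Qed.

Lemma Z1_0 (q p : CC) B : q != 0 -> is_ell_binom q p B -> eqG q p (Z1 B 0) one_s.
Proof.
move=> hq hB i j a b g; have [B0 _] := hB a b g.
rewrite /Z1 /one_s sub0r.
case: (eqVneq i 0) => [->|hi]; first by rewrite lexx oppr0 B0.
case: (boolP (0 <= i)) => h //=; case: (j == - i) => //.
apply: (Bhi q p B a b hq hB g) => //; lia.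
Qed.

Lemma Z2_0 (q p : CC) B : q != 0 -> is_ell_binom q p B -> eqG q p (Z2 B 0) one_s.
Proof.
move=> hq hB i j a b g; have [B0 _] := hB a b g.
rewrite /Z2 /one_s sub0r.
case: (eqVneq i 0) => [->|hi]; first by rewrite lexx oppr0 B0.
case: (boolP (i <= 0)) => h //=; case: (j == - i) => //.
apply: (Blo q p B a b hq hB g) => //; lia.
Qed.
Lemma eqG_sym (q p : CC) u v : eqG q p u v -> eqG q p v u.
Proof. by move=> h i j a b g; rewrite (h i j a b g). Qed.
Arguments eqG_sym {q p u v}.


Lemma eqG_trans (q p : CC) u v w : eqG q p u v -> eqG q p v w -> eqG q p u w.
Proof. by move=> h1 h2 i j a b g; rewrite (h1 i j a b g) (h2 i j a b g). Qed.
Arguments eqG_trans {q p u v w}.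


Lemma eqG_rmulxy (q p : CC) u v : eqG q p u v -> eqG q p (rmulxy q p u) (rmulxy q p v).
Proof.
by move=> h i j a b g; rewrite /rmulxy /rmulx /rmuly (h (i - 1) j a b g) (h i (j - 1) a b g).
Qed.
Arguments eqG_rmulxy {q p u v}.


Lemma eqG_iter (q p : CC) m u v : eqG q p u v ->
  eqG q p (iter m (rmulxy q p) u) (iter m (rmulxy q p) v).
Proof. by move=> h; elim: m => //= m IH; apply: eqG_rmulxy. Qed.
Arguments eqG_iter {q p} m {u v}.


Lemma iter_gen (q p : CC) (Z : int -> Defs.series) :
  (forall n, eqG q p (rmulxy q p (Z n)) (Z (n + 1))) ->
  forall (m : nat) n, eqG q p (iter m (rmulxy q p) (Z n)) (Z (n + m%:Z)).
Proof.
move=> hs; elim=> [|m IH] n /=.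
  by rewrite addr0 => i j a b g.
apply: eqG_trans (eqG_rmulxy (IH n)) _.
have -> : n + m.+1%:Z = n + m%:Z + 1 by rewrite intS; ring.
exact: hs.
Qed.

Lemma inS1_rmulxy (q p : CC) u : inS1 q p u -> inS1 q p (rmulxy q p u).
Proof.
move=> h i j a b g hi; have hi' : i - 1 < 0 by lia.
by rewrite /rmulxy /rmulx /rmuly (h i (j - 1) a b g hi) (h (i - 1) j a b g hi') mul0r addr0.
Qed.

Lemma inS2_rmulxy (q p : CC) u : inS2 q p u -> inS2 q p (rmulxy q p u).
Proof.
move=> h i j a b g hj; have hj' : j - 1 < 0 by lia.
by rewrite /rmulxy /rmulx /rmuly (h i (j - 1) a b g hj') (h (i - 1) j a b g hj) mul0r addr0.
Qed.

Lemma inj1 (q p : CC) u v : inS1 q p u -> inS1 q p v ->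
  eqG q p (rmulxy q p u) (rmulxy q p v) -> eqG q p u v.
Proof.
move=> hu hv h i j a b g.
case: (ltrP i 0) => hi; first by rewrite (hu i j a b g hi) (hv i j a b g hi).
case: i hi => [N|N] hi; last by exfalso; lia.
clear hi.
elim: N j => [|N IH] j.
  have := h 0 (j + 1) a b g; rewrite /rmulxy /rmulx /rmuly (addrK 1 j).
  have hm : (0 : int) - 1 < 0 by [].
  by rewrite (hu (0 - 1) (j + 1) a b g hm) (hv (0 - 1) (j + 1) a b g hm) !mul0r !add0r.
have := h N.+1 (j + 1) a b g; rewrite /rmulxy /rmulx /rmuly (addrK 1 j).
rewrite (_ : N.+1%:Z - 1 = N%:Z); last by rewrite intS; ring.
by rewrite (IH (j + 1)) => /addrI.
Qed.

Lemma inj2 (q p : CC) u v : q != 0 -> inS2 q p u -> inS2 q p v ->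
  eqG q p (rmulxy q p u) (rmulxy q p v) -> eqG q p u v.
Proof.
move=> hq hu hv h i j a b g.
case: (ltrP j 0) => hj; first by rewrite (hu i j a b g hj) (hv i j a b g hj).
case: j hj => [M|M] hj; last by exfalso; lia.
clear hj.
elim: M i => [|M IH] i.
  have := h (i + 1) 0 a b g; rewrite /rmulxy /rmulx /rmuly coefW // (addrK 1 i).
  have hm : (0 : int) - 1 < 0 by [].
  rewrite (hu (i + 1) (0 - 1) a b g hm) (hv (i + 1) (0 - 1) a b g hm) !addr0.
  by move/(mulIf (Wfun_nz q p (i + 1) _ a b hq g)).
have := h (i + 1) M.+1 a b g; rewrite /rmulxy /rmulx /rmuly coefW // (addrK 1 i).
rewrite (_ : M.+1%:Z - 1 = M%:Z); last by rewrite intS; ring.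
rewrite (IH (i + 1)) => /addIr.
by move/(mulIf (Wfun_nz q p (i + 1) _ a b hq g)).
Qed.

Lemma inj_iter (q p : CC) (S : Defs.series -> Prop) :
  (forall u, S u -> S (rmulxy q p u)) ->
  (forall u v, S u -> S v -> eqG q p (rmulxy q p u) (rmulxy q p v) -> eqG q p u v) ->
  forall m u v, S u -> S v ->
    eqG q p (iter m (rmulxy q p) u) (iter m (rmulxy q p) v) -> eqG q p u v.
Proof.
move=> hS hinj.
have iS : forall m w, S w -> S (iter m (rmulxy q p) w).
  by elim=> //= m' IH' w sw; apply: hS; apply: IH'.
elim=> [|m IH] u v su sv h; first exact: h.
apply: (IH u v su sv); apply: hinj (iS _ _ su) (iS _ _ sv) h.
Qed.
Theorem theorem8 (q p : CC) (B : int -> int -> CC -> CC -> CC) :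
  q != 0 -> p != 0 -> `|p| < 1 -> is_ell_binom q p B ->
  (* [x^k y^(n-k)] (x+y)^n = binom(n,k) for all n, k in Z *)
  (forall n k : int,
     (exists z, inS_for q p k z /\ is_pow_xy q p n z) /\
     (forall z, inS_for q p k z -> is_pow_xy q p n z ->
        forall a b, generic q p a b -> z k (n - k) a b = B n k a b))
  (* (x+y)^n = sum_{k >= 0} binom(n,k) x^k y^(n-k) in C[[x,y,y^-1]] *)
  /\ (forall n : int,
     (exists z, inS1 q p z /\ is_pow_xy q p n z) /\
     (forall z, inS1 q p z -> is_pow_xy q p n z ->
        forall i j a b, generic q p a b ->
          z i j a b = (if (0 <= i) && (j == n - i) then B n i a b else 0)))
  (* (x+y)^n = sum_{k <= n} binom(n,k) x^k y^(n-k) in C[[x,x^-1,y]] *)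
  /\ (forall n : int,
     (exists z, inS2 q p z /\ is_pow_xy q p n z) /\
     (forall z, inS2 q p z -> is_pow_xy q p n z ->
        forall i j a b, generic q p a b ->
          z i j a b = (if (i <= n) && (j == n - i) then B n i a b else 0))).
Proof.
move=> hq _ _ hB.
have pw (Z : int -> Defs.series) : (forall n, eqG q p (rmulxy q p (Z n)) (Z (n + 1))) ->
    eqG q p (Z 0) one_s -> forall n, is_pow_xy q p n (Z n).
  move=> hs h0 n; rewrite /is_pow_xy; case: ifP => hn.
    have [m em] := nat_of_nonneg n hn; rewrite em /=.
    apply: eqG_sym; apply: eqG_trans (eqG_iter m (eqG_sym h0)) _.
    by have := iter_gen q p Z hs m 0; rewrite add0r.
  case: n hn => [m|m] hn; first by exfalso; move/negbT: hn; lia.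
  apply: eqG_trans (iter_gen q p Z hs m.+1 (Negz m)) _.
  by have -> : Negz m + m.+1%:Z = 0 by rewrite NegzE; ring.
have un (Z : int -> Defs.series) (S : Defs.series -> Prop) :
   (forall n, is_pow_xy q p n (Z n)) -> (forall n, S (Z n)) ->
   (forall u, S u -> S (rmulxy q p u)) ->
   (forall u v, S u -> S v -> eqG q p (rmulxy q p u) (rmulxy q p v) -> eqG q p u v) ->
   forall n z, S z -> is_pow_xy q p n z -> eqG q p z (Z n).
  move=> hp hSZ hS hinj n z sz; move: (hp n); rewrite /is_pow_xy; case: ifP => _ h1 h2.
    exact: eqG_trans h2 (eqG_sym h1).
  exact: (inj_iter q p S hS hinj _ _ _ sz (hSZ n) (eqG_trans h2 (eqG_sym h1))).
have p1 := pw _ (Z1_step q p B hq hB) (Z1_0 q p B hq hB).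
have p2 := pw _ (Z2_step q p B hq hB) (Z2_0 q p B hq hB).
have S1Z n : inS1 q p (Z1 B n).
  by move=> i j a b g hi; rewrite /Z1; case: ifP => // /andP [h _]; exfalso; lia.
have S2Z n : inS2 q p (Z2 B n).
  by move=> i j a b g hj; rewrite /Z2; case: ifP => // /andP [h /eqP e]; exfalso; lia.
have u1 := un _ _ p1 S1Z (@inS1_rmulxy q p) (@inj1 q p).
have u2 := un _ _ p2 S2Z (@inS2_rmulxy q p) (fun u v => @inj2 q p u v hq).
split; [|split].
- move=> n k; rewrite /inS_for; case: (boolP (0 <= k)) => hk /=; split.
  + by exists (Z1 B n).
  + by move=> z hz hpz a b g; rewrite (u1 n z hz hpz k (n - k) a b g) /Z1 hk eqxx.
  + by exists (Z2 B n).
  + move=> z hz hpz a b g; rewrite (u2 n z hz hpz k (n - k) a b g) /Z2 eqxx andbT.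
    case: ifP => // hkn; symmetry; apply: (Bmid q p B a b hq hB g).
      by move/negbT: hkn; lia.
    by rewrite ltNge.
- move=> n; split; first by exists (Z1 B n).
  by move=> z hz hpz i j a b g; exact: (u1 n z hz hpz i j a b g).
- move=> n; split; first by exists (Z2 B n).
  by move=> z hz hpz i j a b g; exact: (u2 n z hz hpz i j a b g).
Qed.
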